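(* Let $\mathfrak{g}$ be a complex two-step nilpotent Lie algebra of dimension $n\le 6$. Then $\mathfrak{g}$ admits a periodic derivation.
   Context: A derivation $D$ of a Lie algebra $\mathfrak{g}$ is called periodic if there is an integer $m\ge 1$ with $D^m=\mathrm{id}$. *)

(* Defs.v *)
From mathcomp Require Import all_boot all_algebra.
From mathcomp Require Import complex.
From mathcomp Require Import Rstruct.
Set Implicit Arguments. Unset Strict Implicit. Unset Printing Implicit Defensive.
Import GRing.Theory.
Local Open Scope ring_scope.

Definition CC : fieldType := complex Rdefinitions.R.

(* Every n-dimensional Lie algebra over
   F is isomorphic to one of these. *)
Definition is_lie_bracket (F : fieldType) (n : nat)
    (br : 'rV[F]_n -> 'rV[F]_n -> 'rV[F]_n) : Prop :=
  [/\ (forall (a : F) x y z, br (a *: x + y) z = a *: br x z + br y z),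
      (forall (a : F) x y z, br x (a *: y + z) = a *: br x y + br x z),
      (forall x, br x x = 0) &
      (forall x y z, br x (br y z) + br y (br z x) + br z (br x y) = 0)].

Definition two_step_nilpotent (F : fieldType) (n : nat)
    (br : 'rV[F]_n -> 'rV[F]_n -> 'rV[F]_n) : Prop :=
  (forall x y z, br x (br y z) = 0) /\ (exists x y, br x y != 0).

Definition is_derivation (F : fieldType) (n : nat)
    (br : 'rV[F]_n -> 'rV[F]_n -> 'rV[F]_n) (D : 'M[F]_n) : Prop :=
  forall x y, br x y *m D = br (x *m D) y + br x (y *m D).

Definition is_periodic_derivation (F : fieldType) (n : nat)
    (br : 'rV[F]_n -> 'rV[F]_n -> 'rV[F]_n) (D : 'M[F]_n) : Prop :=
  is_derivation br D /\ exists m : nat, (1 <= m)%N /\ D ^+ m = 1%:M.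

(* Main.v *)
Require Import Defs.
From mathcomp Require Import all_boot all_algebra.
From mathcomp Require Import complex.
From mathcomp Require Import ring Rstruct zify.
Set Implicit Arguments. Unset Strict Implicit. Unset Printing Implicit Defensive.
Import GRing.Theory Num.Theory.
Local Open Scope ring_scope.



Lemma br0l (F : fieldType) n (br : 'rV[F]_n -> 'rV[F]_n -> 'rV[F]_n) :
  is_lie_bracket br -> forall z, br 0 z = 0.
Proof.
case=> hl _ _ _ z; have := hl 1 0 0 z; rewrite !scale1r addr0 => h.
by apply: (@addIr _ (br 0 z)); rewrite add0r -h.
Qed.

Lemma br0r (F : fieldType) n (br : 'rV[F]_n -> 'rV[F]_n -> 'rV[F]_n) :
  is_lie_bracket br -> forall z, br z 0 = 0.
Proof.
case=> _ hl _ _ z; have := hl 1 z 0 0; rewrite !scale1r addr0 => h.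
by apply: (@addIr _ (br z 0)); rewrite add0r -h.
Qed.

Lemma brDl (F : fieldType) n (br : 'rV[F]_n -> 'rV[F]_n -> 'rV[F]_n) :
  is_lie_bracket br -> forall x y z, br (x + y) z = br x z + br y z.
Proof. by case=> hl _ _ _ x y z; have := hl 1 x y z; rewrite !scale1r. Qed.

Lemma brDr (F : fieldType) n (br : 'rV[F]_n -> 'rV[F]_n -> 'rV[F]_n) :
  is_lie_bracket br -> forall x y z, br z (x + y) = br z x + br z y.
Proof. by case=> _ hl _ _ x y z; have := hl 1 z x y; rewrite !scale1r. Qed.

Lemma brZl (F : fieldType) n (br : 'rV[F]_n -> 'rV[F]_n -> 'rV[F]_n) :
  is_lie_bracket br -> forall a x z, br (a *: x) z = a *: br x z.
Proof.
move=> hL a x z; have := hL; case=> hl _ _ _; have := hl a x 0 z.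
by rewrite addr0 (br0l hL) addr0.
Qed.

Lemma brZr (F : fieldType) n (br : 'rV[F]_n -> 'rV[F]_n -> 'rV[F]_n) :
  is_lie_bracket br -> forall a x z, br z (a *: x) = a *: br z x.
Proof.
move=> hL a x z; have := hL; case=> _ hl _ _; have := hl a z x 0.
by rewrite addr0 (br0r hL) addr0.
Qed.

Lemma brNl (F : fieldType) n (br : 'rV[F]_n -> 'rV[F]_n -> 'rV[F]_n) :
  is_lie_bracket br -> forall x z, br (- x) z = - br x z.
Proof. by move=> hL x z; rewrite -scaleN1r (brZl hL) scaleN1r. Qed.

Lemma brNr (F : fieldType) n (br : 'rV[F]_n -> 'rV[F]_n -> 'rV[F]_n) :
  is_lie_bracket br -> forall x z, br z (- x) = - br z x.
Proof. by move=> hL x z; rewrite -scaleN1r (brZr hL) scaleN1r. Qed.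

Lemma brC (F : fieldType) n (br : 'rV[F]_n -> 'rV[F]_n -> 'rV[F]_n) :
  is_lie_bracket br -> forall x y, br x y = - br y x.
Proof.
move=> hL x y; have := hL; case=> _ _ ha _.
have := ha (x + y); rewrite (brDl hL) !(brDr hL) !ha add0r addr0 => /eqP.
by rewrite addr_eq0 => /eqP.
Qed.

Lemma br_suml (F : fieldType) n (br : 'rV[F]_n -> 'rV[F]_n -> 'rV[F]_n) :
  is_lie_bracket br -> forall (I : Type) (r : seq I) (P : pred I) f z,
  br (\sum_(i <- r | P i) f i) z = \sum_(i <- r | P i) br (f i) z.
Proof.
move=> hL I r P f z.
by apply: (big_morph (fun x => br x z)); [move=> x y; exact: brDl | exact: br0l].
Qed.

Lemma br_sumr (F : fieldType) n (br : 'rV[F]_n -> 'rV[F]_n -> 'rV[F]_n) :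
  is_lie_bracket br -> forall (I : Type) (r : seq I) (P : pred I) f z,
  br z (\sum_(i <- r | P i) f i) = \sum_(i <- r | P i) br z (f i).
Proof.
move=> hL I r P f z.
by apply: (big_morph (fun x => br z x)); [move=> x y; exact: brDr | exact: br0r].
Qed.


Lemma decomp_periodic (F : fieldType) n (br : 'rV[F]_n -> 'rV[F]_n -> 'rV[F]_n)
  (m N : nat) (U : 'I_m -> 'M[F]_n) (mu : 'I_m -> F) :
  is_lie_bracket br -> (0 < N)%N -> (forall i, mu i ^+ N = 1) ->
  (1%:M <= \sum_i U i)%MS -> (\sum_i \rank (U i) <= n)%N ->
  (forall i j u v, (u <= U i)%MS -> (v <= U j)%MS ->
     (br u v <= \sum_(k | mu k == (mu i + mu j)%R) U k)%MS) ->
  exists D, is_periodic_derivation br D.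
Proof.
move=> hL hN hmu hfull hrk hbr.
have hdir : mxdirect (\sum_i U i).
  rewrite mxdirectE /=; rewrite eqn_leq (mxrank_sum_leqif _).1 /=.
  apply: leq_trans hrk _.
  by rewrite -{1}(mxrank1 F n) mxrankS.
have hcap : forall j, (U j :&: \sum_(l | l != j) U l)%MS = 0.
  by move/mxdirect_sumsP: hdir => h j; exact: h.
pose D := \sum_j mu j *: proj_mx (U j) (\sum_(l | l != j) U l)%MS.
have eig : forall j (u : 'rV_n), (u <= U j)%MS -> u *m D = mu j *: u.
  move=> j u hu; rewrite mulmx_sumr (bigD1 j) //= -scalemxAr proj_mx_id //.
  rewrite big1 ?addr0 // => l hl; rewrite -scalemxAr proj_mx_0 ?scaler0 //.
  by apply: (sumsmx_sup j); rewrite // eq_sym.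
have dec : forall x : 'rV_n, exists xs : 'I_m -> 'rV_n,
    (forall i, (xs i <= U i)%MS) /\ x = \sum_i xs i.
  move=> x; have : (x <= \sum_i U i)%MS by apply: submx_trans hfull; exact: submx1.
  case/sub_sumsmxP => u_ ->; exists (fun i => u_ i *m U i); split=> // i.
  exact: submxMl.
have eigS : forall lam (w : 'rV_n), (w <= \sum_(k | mu k == lam) U k)%MS ->
    w *m D = lam *: w.
  move=> lam w /sub_sumsmxP [u_ ->]; rewrite mulmx_suml scaler_sumr.
  apply: eq_bigr => k /eqP hk; by rewrite (eig k) ?submxMl // hk.
exists D; split.
  move=> x y; case: (dec x) => xs [hxs ->]; case: (dec y) => ys [hys ->].
  rewrite (br_suml hL) mulmx_suml.
  have -> : (\sum_i xs i) *m D = \sum_i mu i *: xs i.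
    by rewrite mulmx_suml; apply: eq_bigr => i _; rewrite (eig i).
  have -> : (\sum_i ys i) *m D = \sum_i mu i *: ys i.
    by rewrite mulmx_suml; apply: eq_bigr => i _; rewrite (eig i).
  rewrite !(br_suml hL) -big_split /=; apply: eq_bigr => i _.
  rewrite !(br_sumr hL) -big_split mulmx_suml /=; apply: eq_bigr => j _.
  rewrite (brZl hL) (brZr hL) -scalerDl; apply: eigS; exact: hbr.
exists N; split => //.
have pw : forall k (x : 'rV_n) (xs : 'I_m -> 'rV_n), (forall i, (xs i <= U i)%MS) ->
    x = \sum_i xs i -> x *m D ^+ k = \sum_i mu i ^+ k *: xs i.
  move=> k x xs hxs ->; elim: k => [|k IH].
    by rewrite expr0 mulmx1; apply: eq_bigr => i _; rewrite expr0 scale1r.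
  rewrite exprSr -mulmxE mulmxA IH mulmx_suml; apply: eq_bigr => i _.
  by rewrite -scalemxAl (eig i) // scalerA exprSr.
apply/row_matrixP => i; rewrite !rowE mulmx1.
case: (dec 'e_i) => xs [hxs hx]; rewrite (pw N _ xs hxs hx) [in RHS]hx.
by apply: eq_bigr => j _; rewrite hmu scale1r.
Qed.


Definition adm (F : fieldType) n (br : 'rV[F]_n -> 'rV[F]_n -> 'rV[F]_n) (x : 'rV[F]_n)
  : 'M[F]_n := \matrix_(j < n) br x 'e_j.

Lemma admE (F : fieldType) n (br : 'rV[F]_n -> 'rV[F]_n -> 'rV[F]_n) :
  is_lie_bracket br -> forall x y, y *m adm br x = br x y.
Proof.
move=> hL x y; rewrite mulmx_sum_row [in RHS](row_sum_delta y) (br_sumr hL).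
by apply: eq_bigr => j _; rewrite rowK (brZr hL).
Qed.

Definition Zc (F : fieldType) n (br : 'rV[F]_n -> 'rV[F]_n -> 'rV[F]_n) : 'M[F]_n :=
  (\bigcap_(j < n) kermx (adm br 'e_j))%MS.

Lemma ZcP (F : fieldType) n (br : 'rV[F]_n -> 'rV[F]_n -> 'rV[F]_n) :
  is_lie_bracket br -> forall v, reflect (forall y, br y v = 0) (v <= Zc br)%MS.
Proof.
move=> hL v; apply: (iffP idP).
  move/sub_bigcapmxP => h y; rewrite (row_sum_delta y) (br_suml hL).
  apply: big1 => j _; rewrite (brZl hL).
  by have := h j isT; rewrite sub_kermx admE // => /eqP ->; rewrite scaler0.
move=> h; apply/sub_bigcapmxP => j _; by rewrite sub_kermx admE // h.
Qed.

Lemma ZcP2 (F : fieldType) n (br : 'rV[F]_n -> 'rV[F]_n -> 'rV[F]_n) :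
  is_lie_bracket br -> forall v y, (v <= Zc br)%MS -> br v y = 0.
Proof. by move=> hL v y /(ZcP hL) h; rewrite (brC hL) h oppr0. Qed.

Definition abel (F : fieldType) n (br : 'rV[F]_n -> 'rV[F]_n -> 'rV[F]_n) (A : 'M[F]_n) :=
  forall u v : 'rV_n, (u <= A)%MS -> (v <= A)%MS -> br u v = 0.

Lemma two_piece (F : fieldType) n (br : 'rV[F]_n -> 'rV[F]_n -> 'rV[F]_n) (z : F)
  (A B : 'M[F]_n) :
  is_lie_bracket br -> (forall x y w, br w (br x y) = 0) ->
  z ^+ 6 = 1 -> 1 + z ^+ 2 = z ->
  abel br A -> abel br B -> (1%:M <= A + B + Zc br)%MS ->
  exists D, is_periodic_derivation br D.
Proof.
move=> hL h2 hz6 hz abA abB hfull.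
set Z := Zc br.
have brZ : forall x y, (br x y <= Z)%MS by move=> x y; apply/(ZcP hL) => w; exact: h2.
pose B1 := (B :\: Z)%MS; pose A1 := (A :\: (B + Z))%MS.
pose U := fun i : 'I_3 => nth 0 [:: A1; B1; Z] i.
pose mu := fun i : 'I_3 => nth 0 [:: 1; z ^+ 2; z] i.
apply: (@decomp_periodic F n br 3 6 U mu hL) => //.
- case=> [[|[|[|?]]] ?] //=; rewrite ?expr1n // -exprM mulnC exprM hz6 expr1n //.
- rewrite !big_ord_recl big_ord0 /U /=.
  set R := (B1 + (Z + 0))%MS.
  have hZ : (Z <= R)%MS := submx_trans (addsmxSl Z 0) (addsmxSr _ _).
  have hB : (B <= R)%MS.
    have := addsmx_diff_cap_eq B Z => /eqmxP; rewrite -/B1 => /andP [_ hB].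
    apply: submx_trans hB _; apply: addsmxS; first exact: submx_refl.
    exact: submx_trans (capmxSr _ _) (addsmxSl _ _).
  have hBZ : (B + Z <= R)%MS by rewrite addsmx_sub hB hZ.
  have hA : (A <= A1 + R)%MS.
    have := addsmx_diff_cap_eq A (B + Z)%MS => /eqmxP; rewrite -/A1 => /andP [_ hA].
    apply: submx_trans hA _; apply: addsmxS; first exact: submx_refl.
    exact: submx_trans (capmxSr _ _) hBZ.
  apply: submx_trans hfull _; rewrite !addsmx_sub hA.
  by rewrite !(submx_trans _ (addsmxSr A1 R)).
- rewrite !big_ord_recl big_ord0 /U /= addn0.
  rewrite -(mxrank_disjoint_sum (capmx_diff B Z)).
  have hc : (A1 :&: (B1 + Z) = 0)%MS.
    apply/eqP; rewrite -submx0 -(capmx_diff A (B + Z)%MS) capmxS //.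
    by rewrite addsmxS ?diffmxSl.
  by rewrite -(mxrank_disjoint_sum hc) rank_leq_col.
move=> i j u v hu hv.
have zer : br u v = 0 -> (br u v <= \sum_(k | mu k == (mu i + mu j)%R) U k)%MS.
  by move=> ->; exact: sub0mx.
have top : mu (@Ordinal 3 2 isT) == (mu i + mu j)%R ->
    (br u v <= \sum_(k | mu k == (mu i + mu j)%R) U k)%MS.
  by move=> h; apply: (sumsmx_sup (@Ordinal 3 2 isT)) => //; exact: brZ.
move: hu hv; rewrite /U.
case: i zer top => [[|[|[|?]]] ?] //=; case: j => [[|[|[|?]]] ?] //= zer top hu hv.
- by apply: zer; apply: abA; [exact: submx_trans hu (diffmxSl _ _) | exact: submx_trans hv (diffmxSl _ _)].
- by apply: top; rewrite /mu /= hz.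
- by apply: zer; move/(ZcP hL): hv.
- by apply: top; rewrite /mu /= addrC hz.
- by apply: zer; apply: abB; [exact: submx_trans hu (diffmxSl _ _) | exact: submx_trans hv (diffmxSl _ _)].
- by apply: zer; move/(ZcP hL): hv.
- by apply: zer; exact: ZcP2 hL _ _ hu.
- by apply: zer; exact: ZcP2 hL _ _ hu.
- by apply: zer; exact: ZcP2 hL _ _ hu.
Qed.


Lemma zeta_facts (F : fieldType) (z : F) : z ^+ 2 = z - 1 ->
  [/\ z ^+ 3 = -1, z ^+ 4 = - z, z ^+ 5 = 1 - z & z ^+ 6 = 1].
Proof.
move=> h.
have e3 : z ^+ 3 = -1 by rewrite exprS h mulrBr mulr1 -expr2 h; ring.
have e4 : z ^+ 4 = - z by rewrite exprS e3; ring.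
have e5 : z ^+ 5 = 1 - z by rewrite exprS e4 mulrN -expr2 h; ring.
have e6 : z ^+ 6 = 1 by rewrite exprS e5 mulrBr mulr1 -expr2 h; ring.
by split.
Qed.

Lemma brline (F : fieldType) n (br : 'rV[F]_n -> 'rV[F]_n -> 'rV[F]_n) :
  is_lie_bracket br -> forall a b u v : 'rV_n, (u <= a)%MS -> (v <= b)%MS ->
  (br u v <= br a b)%MS.
Proof.
move=> hL a b u v /sub_rVP [c ->] /sub_rVP [e ->].
by rewrite (brZl hL) (brZr hL) !scalemx_sub.
Qed.

Lemma six_piece (F : fieldType) n (br : 'rV[F]_n -> 'rV[F]_n -> 'rV[F]_n) (z : F)
  (x u v : 'rV[F]_n) :
  is_lie_bracket br -> (forall x y w, br w (br x y) = 0) ->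
  z ^+ 2 = z - 1 -> (6 <= n)%N ->
  (1%:M <= x + u + v + (br x u + br u v + br v x))%MS ->
  exists D, is_periodic_derivation br D.
Proof.
move=> hL h2 hz hn hfull.
have [e3 e4 e5 e6] := zeta_facts hz.
have brZ : forall x y, (br x y <= Zc br)%MS by move=> x0 y0; apply/(ZcP hL) => w; exact: h2.
pose U := fun i : 'I_6 => <<nth 0 [:: x; u; v; br x u; br u v; br v x] i>>%MS.
pose mu := fun i : 'I_6 => nth 0 [:: 1; z ^+ 2; z ^+ 4; z; z ^+ 3; z ^+ 5] i.
apply: (@decomp_periodic F n br 6 6 U mu hL) => //.
- case=> [[|[|[|[|[|[|?]]]]]] ?] //=; rewrite ?expr1n // -exprM mulnC exprM e6 expr1n //.
- apply: submx_trans hfull _; rewrite !addsmx_sub.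
  apply/andP; split; [apply/andP; split; [apply/andP; split|]|
      apply/andP; split; [apply/andP; split|]].
  + by apply: (sumsmx_sup (@Ordinal 6 0 isT)) => //; rewrite /U genmxE.
  + by apply: (sumsmx_sup (@Ordinal 6 1 isT)) => //; rewrite /U genmxE.
  + by apply: (sumsmx_sup (@Ordinal 6 2 isT)) => //; rewrite /U genmxE.
  + by apply: (sumsmx_sup (@Ordinal 6 3 isT)) => //; rewrite /U genmxE.
  + by apply: (sumsmx_sup (@Ordinal 6 4 isT)) => //; rewrite /U genmxE.
  + by apply: (sumsmx_sup (@Ordinal 6 5 isT)) => //; rewrite /U genmxE.
- apply: leq_trans _ hn.
  apply: (@leq_trans (\sum_(i < 6) 1)%N); last by rewrite sum1_card card_ord.
  by apply: leq_sum => i _; rewrite /U mxrank_gen rank_rV leq_b1.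
move=> i j a b ha hb.
have same : forall w : 'rV_n, (a <= w)%MS -> (b <= w)%MS -> br a b = 0.
  move=> w h1 h3; have := brline hL h1 h3.
  by case: hL => _ _ -> _ /submx0null.
case: i ha => [[|[|[|[|[|[|?]]]]]] ?] // ha; case: j hb => [[|[|[|[|[|[|?]]]]]] ?] // hb;
  rewrite /U /= genmxE in ha; rewrite /U /= genmxE in hb;
  first [ by have -> : br a b = 0 := same _ ha hb; exact: sub0mx
        | by have -> : br a b = 0 := ZcP2 hL b (submx_trans ha (brZ _ _)); exact: sub0mx
        | by have -> : br a b = 0 := elimT (ZcP hL _) (submx_trans hb (brZ _ _)) a; exact: sub0mx
        | by apply: (sumsmx_sup (@Ordinal 6 3 isT)); [(rewrite /mu /=; apply/eqP; rewrite ?hz ?e3 ?e4 ?e5; ring) | (rewrite /U /= genmxE; apply: submx_trans (brline hL ha hb) _; first [ exact: submx_refl | by rewrite (brC hL) eqmx_opp ])]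
        | by apply: (sumsmx_sup (@Ordinal 6 4 isT)); [(rewrite /mu /=; apply/eqP; rewrite ?hz ?e3 ?e4 ?e5; ring) | (rewrite /U /= genmxE; apply: submx_trans (brline hL ha hb) _; first [ exact: submx_refl | by rewrite (brC hL) eqmx_opp ])]
        | by apply: (sumsmx_sup (@Ordinal 6 5 isT)); [(rewrite /mu /=; apply/eqP; rewrite ?hz ?e3 ?e4 ?e5; ring) | (rewrite /U /= genmxE; apply: submx_trans (brline hL ha hb) _; first [ exact: submx_refl | by rewrite (brC hL) eqmx_opp ])] ].
Qed.


Lemma pick_in (F : fieldType) n m1 m2 (X : 'M[F]_(m1, n)) (Y : 'M[F]_(m2, n)) :
  (\rank X < \rank Y)%N -> exists v : 'rV_n, (v <= Y)%MS /\ ~~ (v <= X)%MS.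
Proof.
move=> h; have : ~~ (Y <= X)%MS.
  by apply/negP => /mxrankS; rewrite leqNgt h.
case/row_subPn => i hi; exists (row i Y); split => //; exact: row_sub.
Qed.

Lemma rank_add1 (F : fieldType) n m (X : 'M[F]_(m, n)) (v : 'rV_n) :
  ~~ (v <= X)%MS -> \rank (X + v)%MS = (\rank X).+1.
Proof.
move=> hv.
have hv0 : v != 0 by apply: contraNneq hv => ->; exact: sub0mx.
have hc : \rank (X :&: v)%MS = 0%N.
  have h1 := mxrank_leqif_sup (capmxSr X v).
  have h3 : ~~ (v <= X :&: v)%MS by rewrite sub_capmx (negbTE hv).
  have := ltn_leqif h1; rewrite h3 rank_rV hv0.
  by case: (\rank _) => // k; rewrite ltnS.
have := mxrank_sum_cap X v; rewrite hc addn0 rank_rV hv0 addn1 => ->.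
by [].
Qed.

Lemma rank_full (F : fieldType) n m (X : 'M[F]_(m, n)) :
  \rank X = n -> (1%:M <= X)%MS.
Proof. by move=> h; rewrite sub1mx /row_full h. Qed.

Definition commb (F : fieldType) n (br : 'rV[F]_n -> 'rV[F]_n -> 'rV[F]_n) m1 m2
  (M : 'M[F]_(m1, n)) (N : 'M[F]_(m2, n)) :=
  forall u v : 'rV_n, (u <= M)%MS -> (v <= N)%MS -> br u v = 0.

Lemma commb_sym (F : fieldType) n (br : 'rV[F]_n -> 'rV[F]_n -> 'rV[F]_n) m1 m2
  (M : 'M[F]_(m1, n)) (N : 'M[F]_(m2, n)) :
  is_lie_bracket br -> commb br M N -> commb br N M.
Proof. by move=> hL h u v hu hv; rewrite (brC hL) h ?oppr0. Qed.

Lemma commb_addl (F : fieldType) n (br : 'rV[F]_n -> 'rV[F]_n -> 'rV[F]_n) m1 m2 m3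
  (M1 : 'M[F]_(m1, n)) (M2 : 'M[F]_(m2, n)) (N : 'M[F]_(m3, n)) :
  is_lie_bracket br -> commb br M1 N -> commb br M2 N -> commb br (M1 + M2)%MS N.
Proof.
move=> hL h1 h2 u v /sub_addsmxP [[p q] /= ->] hv.
by rewrite (brDl hL) h1 ?h2 ?addr0 ?submxMl.
Qed.

Lemma commb_addr (F : fieldType) n (br : 'rV[F]_n -> 'rV[F]_n -> 'rV[F]_n) m1 m2 m3
  (M : 'M[F]_(m1, n)) (N1 : 'M[F]_(m2, n)) (N2 : 'M[F]_(m3, n)) :
  is_lie_bracket br -> commb br M N1 -> commb br M N2 -> commb br M (N1 + N2)%MS.
Proof.
move=> hL h1 h2 u v hu /sub_addsmxP [[p q] /= ->].
by rewrite (brDr hL) h1 ?h2 ?addr0 ?submxMl.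
Qed.

Lemma commb_rv (F : fieldType) n (br : 'rV[F]_n -> 'rV[F]_n -> 'rV[F]_n) (x y : 'rV_n) :
  is_lie_bracket br -> br x y = 0 -> commb br x y.
Proof.
move=> hL h u v /sub_rVP [a ->] /sub_rVP [b ->].
by rewrite (brZl hL) (brZr hL) h !scaler0.
Qed.

Lemma commb_Zl (F : fieldType) n (br : 'rV[F]_n -> 'rV[F]_n -> 'rV[F]_n) m1 m2
  (M : 'M[F]_(m1, n)) (N : 'M[F]_(m2, n)) :
  is_lie_bracket br -> (M <= Zc br)%MS -> commb br M N.
Proof. move=> hL h u v hu hv; apply: (ZcP2 hL v); exact: submx_trans hu h. Qed.

Lemma commb_Zr (F : fieldType) n (br : 'rV[F]_n -> 'rV[F]_n -> 'rV[F]_n) m1 m2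
  (M : 'M[F]_(m1, n)) (N : 'M[F]_(m2, n)) :
  is_lie_bracket br -> (N <= Zc br)%MS -> commb br M N.
Proof. by move=> hL h; apply: commb_sym => //; exact: commb_Zl. Qed.

Definition Cn (F : fieldType) n (br : 'rV[F]_n -> 'rV[F]_n -> 'rV[F]_n) (x : 'rV_n) :=
  kermx (adm br x).

Lemma CnP (F : fieldType) n (br : 'rV[F]_n -> 'rV[F]_n -> 'rV[F]_n) x v :
  is_lie_bracket br -> (v <= Cn br x)%MS = (br x v == 0).
Proof. by move=> hL; rewrite /Cn sub_kermx admE. Qed.

Lemma row_adm (F : fieldType) n (br : 'rV[F]_n -> 'rV[F]_n -> 'rV[F]_n) m
  (M : 'M[F]_(m, n)) x i :
  is_lie_bracket br -> row i (M *m adm br x) = br x (row i M).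
Proof. by move=> hL; rewrite row_mul admE. Qed.

Lemma adm_Z (F : fieldType) n (br : 'rV[F]_n -> 'rV[F]_n -> 'rV[F]_n) x :
  is_lie_bracket br -> (forall x y w, br w (br x y) = 0) -> (adm br x <= Zc br)%MS.
Proof.
move=> hL h2; apply/row_subP => j; rewrite /adm rowK.
by apply/(ZcP hL) => w; exact: h2.
Qed.

Lemma rank_Cn (F : fieldType) n (br : 'rV[F]_n -> 'rV[F]_n -> 'rV[F]_n) x :
  \rank (Cn br x) = (n - \rank (adm br x))%N.
Proof. by rewrite /Cn mxrank_ker. Qed.


Lemma negmx_sub (F : fieldType) n m (X : 'M[F]_(m, n)) (w : 'rV_n) :
  (w <= X)%MS -> (- w <= X)%MS.
Proof. by move=> h; rewrite -scaleN1r scalemx_sub. Qed.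

Lemma adm_le_I (F : fieldType) n (br : 'rV[F]_n -> 'rV[F]_n -> 'rV[F]_n)
  (A0 : 'M[F]_n) (u v a : 'rV_n) :
  is_lie_bracket br -> commb br A0 A0 -> (1%:M <= A0 + u + v)%MS -> (a <= A0)%MS ->
  (adm br a <= A0 *m adm br u + A0 *m adm br v)%MS.
Proof.
move=> hL hab hfull ha.
rewrite -[adm br a]mul1mx; apply: submx_trans (submxMr (adm br a) hfull) _.
rewrite addsmxMr addsmx_sub addsmxMr addsmx_sub; apply/andP; split; [apply/andP; split|].
- have -> : A0 *m adm br a = 0.
    by apply/eqP; rewrite -sub_kermx; apply/row_subP => i; rewrite /= sub_kermx admE // hab // row_sub.
  exact: sub0mx.
- rewrite admE // (brC hL) -admE //; apply: negmx_sub.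
  exact: submx_trans (submxMr _ ha) (addsmxSl _ _).
- rewrite admE // (brC hL) -admE //; apply: negmx_sub.
  exact: submx_trans (submxMr _ ha) (addsmxSr _ _).
Qed.

Lemma fix_pair (F : fieldType) n (br : 'rV[F]_n -> 'rV[F]_n -> 'rV[F]_n)
  (A0 : 'M[F]_n) (u v : 'rV_n) :
  is_lie_bracket br -> commb br A0 A0 ->
  (br u v <= A0 *m adm br u + A0 *m adm br v)%MS ->
  exists u' v', [/\ br u' v' = 0, (u <= A0 + u')%MS & (v <= A0 + v')%MS].
Proof.
move=> hL hab /sub_addsmxP [[p q] /= e].
set b := p *m A0 in e; set a := q *m A0 in e.
rewrite !mulmxA -/b -/a !admE // in e.
have ha : (a <= A0)%MS by exact: submxMl.
have hb : (b <= A0)%MS by exact: submxMl.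
exists (u + a), (v - b); split.
- rewrite (brDl hL) !(brDr hL) e (brNr hL) (brNr hL) (hab a b) // oppr0 addr0.
  by rewrite [br a v](brC hL) addrAC addrK subrr.
- have e1 : u = (u + a) + (- a) by rewrite addrK.
  rewrite {1}e1.
  apply: addmx_sub; first exact: addsmxSr.
  by apply: negmx_sub; exact: submx_trans ha (addsmxSl _ _).
- have e1 : v = (v - b) + b by rewrite subrK.
  rewrite {1}e1.
  apply: addmx_sub; first exact: addsmxSr.
  exact: submx_trans hb (addsmxSl _ _).
Qed.

Lemma from_fix (F : fieldType) n (br : 'rV[F]_n -> 'rV[F]_n -> 'rV[F]_n) (z : F)
  (A0 : 'M[F]_n) (u v : 'rV_n) :
  is_lie_bracket br -> (forall x y w, br w (br x y) = 0) ->
  z ^+ 6 = 1 -> 1 + z ^+ 2 = z ->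
  commb br A0 A0 -> (1%:M <= A0 + u + v)%MS ->
  (br u v <= A0 *m adm br u + A0 *m adm br v)%MS ->
  exists D, is_periodic_derivation br D.
Proof.
move=> hL h2 hz6 hz hab hfull hI.
have [u' [v' [e hu hv]]] := fix_pair hL hab hI.
have hal : forall w, br w w = 0 by case: hL.
apply: (@two_piece F n br z A0 (u' + v')%MS hL h2 hz6 hz hab).
  apply: commb_addl => //; apply: commb_addr => //; apply: commb_rv => //.
  by rewrite (brC hL) e oppr0.
apply: submx_trans hfull _; rewrite !addsmx_sub.
rewrite (submx_trans (addsmxSl A0 (u' + v')%MS)) ?addsmxSl //=.
rewrite (submx_trans hu) ?(submx_trans hv) //.
- rewrite addsmx_sub (submx_trans (addsmxSl A0 (u' + v')%MS)) ?addsmxSl //=.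
  apply: submx_trans (addsmxSl _ _); apply: submx_trans (addsmxSr _ _); exact: addsmxSr.
- rewrite addsmx_sub (submx_trans (addsmxSl A0 (u' + v')%MS)) ?addsmxSl //=.
  apply: submx_trans (addsmxSl _ _); apply: submx_trans (addsmxSr _ _); exact: addsmxSl.
Qed.


Lemma pick_new (F : fieldType) n m1 m2 (X : 'M[F]_(m1, n)) (Y : 'M[F]_(m2, n)) :
  (\rank X < \rank Y)%N ->
  exists v : 'rV_n, [/\ (v <= Y)%MS, ~~ (v <= X)%MS & \rank (X + v)%MS = (\rank X).+1].
Proof.
move=> h; have [v [h1 h2]] := pick_in h; exists v; split => //; exact: rank_add1.
Qed.

Lemma pick_out (F : fieldType) n m1 (X : 'M[F]_(m1, n)) :
  (\rank X < n)%N ->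
  exists v : 'rV_n, ~~ (v <= X)%MS /\ \rank (X + v)%MS = (\rank X).+1.
Proof.
move=> h; have h' : (\rank X < \rank (1%:M : 'M[F]_n))%N by rewrite mxrank1.
by have [v [_ h1 h2]] := pick_new h'; exists v.
Qed.

Lemma ext1 (F : fieldType) n m1 (X : 'M[F]_(m1, n)) :
  exists v : 'rV_n, \rank (X + v)%MS = minn (\rank X).+1 n.
Proof.
case: (ltnP (\rank X) n) => h.
  have [v [_ e]] := pick_out h; exists v; rewrite e; apply/esym/minn_idPl; exact: h.
exists 0; have e : \rank X = n by apply/eqP; rewrite eqn_leq rank_leq_col h.
rewrite addsmx0 e; apply/esym/minn_idPr; exact: leqnSn.
Qed.

Lemma sub_rank_eq (F : fieldType) n m1 m2 (X : 'M[F]_(m1, n)) (Y : 'M[F]_(m2, n)) :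
  (X <= Y)%MS -> (\rank Y <= \rank X)%N -> (Y <= X)%MS.
Proof.
move=> h1 h2; have := mxrank_leqif_sup h1 => -[_ <-].
by rewrite eqn_leq h2 mxrankS.
Qed.

Lemma ZCn (F : fieldType) n (br : 'rV[F]_n -> 'rV[F]_n -> 'rV[F]_n) x :
  is_lie_bracket br -> (Zc br <= Cn br x)%MS.
Proof.
move=> hL; apply/row_subP => i; rewrite (CnP _ _ hL).
by have := row_sub i (Zc br) => /(ZcP hL) ->.
Qed.

Lemma rank_Cn_ge (F : fieldType) n (br : 'rV[F]_n -> 'rV[F]_n -> 'rV[F]_n) x m (I : 'M[F]_(m, n)) :
  (adm br x <= I)%MS -> (n - \rank I <= \rank (Cn br x))%N.
Proof. by move=> h; rewrite rank_Cn leq_sub2l // mxrankS. Qed.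

Lemma sub_Cn_rows (F : fieldType) n (br : 'rV[F]_n -> 'rV[F]_n -> 'rV[F]_n) x m (M : 'M[F]_(m, n)) :
  is_lie_bracket br -> commb br x M -> (x <= x)%MS -> (M <= Cn br x)%MS.
Proof.
move=> hL h _; apply/row_subP => i; rewrite (CnP _ _ hL); apply/eqP.
by apply: h; [exact: submx_refl | exact: row_sub].
Qed.


Ltac subs := first
  [ exact: submx_refl
  | by rewrite genmxE
  | match goal with |- is_true (submx (addsmx _ _) _) =>
      rewrite addsmx_sub; apply/andP; split; subs end
  | match goal with |- is_true (submx _ (addsmx ?b ?c)) =>
      first [ apply: (submx_trans _ (addsmxSl b c)); subs
            | apply: (submx_trans _ (addsmxSr b c)); subs ] end ].

Lemma subadd (F : fieldType) n m1 m2 m3 (A : 'M[F]_(m1, n)) (B : 'M[F]_(m2, n)) (C : 'M[F]_(m3, n)) :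
  (A <= C)%MS -> (B <= C)%MS -> (A + B <= C)%MS.
Proof. by rewrite addsmx_sub => -> ->. Qed.

Ltac nlia := repeat match goal with
  | H : is_true ?b |- _ => lazymatch b with leq _ _ => fail | _ => clear H end
  end; lia.

Ltac comms0 hL Z :=
  match goal with
  | |- commb _ Z _ => apply: (commb_Zl hL); exact: submx_refl
  | |- commb _ _ Z => apply: (commb_Zr hL); exact: submx_refl
  | |- commb _ ?a ?a => apply: (commb_rv hL);
        match goal with H : forall _, _ = 0 |- _ => exact: H end
  | |- commb _ ?a ?b => apply: (commb_rv hL);
        first [ assumption
              | rewrite (brC hL); match goal with H : _ b a = 0 |- _ => by rewrite H oppr0 end ]
  end.
Ltac comms1 hL Z :=
  match goal with
  | |- commb _ (addsmx _ _) _ => apply: (commb_addl hL); comms1 hL Z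
  | |- commb _ _ (addsmx _ _) => apply: (commb_addr hL); comms1 hL Z
  | _ => comms0 hL Z
  end.
Lemma abel_of_commb (F : fieldType) n (br : 'rV[F]_n -> 'rV[F]_n -> 'rV[F]_n) (A : 'M[F]_n) :
  commb br A A -> abel br A.
Proof. by []. Qed.
Ltac comms := match goal with hL : is_lie_bracket _, Z := Zc _ |- _ =>
  try apply: abel_of_commb; comms1 hL Z end.

Lemma main_gen (F : fieldType) n (br : 'rV[F]_n -> 'rV[F]_n -> 'rV[F]_n) (z : F) :
  z ^+ 2 = z - 1 -> (n <= 6)%N -> is_lie_bracket br -> two_step_nilpotent br ->
  exists D, is_periodic_derivation br D.
Proof.
move=> hz hn hL [h2' [x0 [y0 hne]]].
have h2 : forall x y w, br w (br x y) = 0 by move=> x y w; exact: h2'.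
have [e3 e4 e5 e6] := zeta_facts hz.
have hz' : 1 + z ^+ 2 = z by rewrite hz addrC subrK.
have hal : forall w, br w w = 0 by case: hL.
set Z := Zc br.
have brZ : forall x y, (br x y <= Z)%MS by move=> x y; apply/(ZcP hL) => w; exact: h2.
set r := \rank Z.
have rpos : (0 < r)%N.
  by have := mxrankS (brZ x0 y0); rewrite rank_rV hne.
have rle : (r <= n)%N := rank_leq_col Z.
have admZ : forall x : 'rV_n, (adm br x <= Z)%MS by move=> x; exact: adm_Z.
have abZx : forall x : 'rV_n, commb br (Z + x)%MS (Z + x)%MS.
  move=> x; apply: (commb_addl hL); apply: (commb_addr hL);
    try (apply: (commb_Zl hL); exact: submx_refl);
    try (apply: (commb_Zr hL); exact: submx_refl).
  exact: (commb_rv hL).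
have hZ1 : forall x : 'rV_n, ~~ (x <= Z)%MS -> \rank (Z + x)%MS = r.+1 by move=> x; exact: rank_add1.
case: (leqP n r.+2) => hA.
  have [x ex] := ext1 Z; have [u eu] := ext1 (Z + x)%MS.
  apply: (@two_piece F n br z (Z + x)%MS <<u>>%MS hL h2 e6 hz' (abZx x)).
    by move=> a b; rewrite !genmxE; apply: (commb_rv hL).
  have : (1%:M <= Z + x + u)%MS.
    apply: rank_full; rewrite eu ex; nlia.
  move/submx_trans; apply; subs.
have [hB|/eqP hB] := eqVneq n r.+3.
  have [x [hx rx]] := @pick_out F n n Z ltac:(nlia).
  have [u [hu ru]] := @pick_out F n n (Z + x)%MS ltac:(rewrite rx; nlia).
  have [v [hv rv]] := @pick_out F n n (Z + x + u)%MS ltac:(rewrite ru rx; nlia).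
  have hfull : (1%:M <= Z + x + u + v)%MS by apply: rank_full; rewrite rv ru rx; nlia.
  set A0 := (Z + x)%MS in hfull rx ru rv hu hv.
  set I := (A0 *m adm br u + A0 *m adm br v)%MS.
  case: (boolP (br u v <= I)%MS) => hI.
    exact: (from_fix hL h2 e6 hz' (abZx x) hfull hI).
  have IZ : (I <= Z)%MS.
    by rewrite addsmx_sub !(submx_trans (submxMl _ _)) ?admZ.
  have rI := rank_add1 hI.
  case: (leqP 2 (\rank I)) => hr.
    have hIr : (\rank (I + br u v)%MS <= r)%N.
      by apply: mxrankS; rewrite addsmx_sub IZ brZ.
    have ZI : (Z <= I + br u v)%MS.
      by apply: sub_rank_eq; [rewrite addsmx_sub IZ brZ | rewrite rI; nlia].
    have hZu : forall w : 'rV_n, (Z *m adm br w = 0).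
      by move=> w; apply/eqP; rewrite -sub_kermx; exact: ZCn.
    have hAu : (A0 *m adm br u <= br x u)%MS.
      rewrite /A0 addsmxMr addsmx_sub hZu sub0mx /= admE // (brC hL).
      by apply: negmx_sub; exact: submx_refl.
    have hAv : (A0 *m adm br v <= br v x)%MS.
      by rewrite /A0 addsmxMr addsmx_sub hZu sub0mx /= admE.
    apply: (@six_piece F n br z x u v hL h2 hz); first by nlia.
    set T := (x + u + v + (br x u + br u v + br v x))%MS.
    apply: submx_trans hfull _; rewrite /A0.
    have hZT : (Z <= T)%MS.
      apply: submx_trans ZI _; rewrite addsmx_sub; apply/andP; split; last by rewrite /T; subs.
      rewrite addsmx_sub; apply/andP; split.
        by apply: submx_trans hAu _; rewrite /T; subs.
      by apply: submx_trans hAv _; rewrite /T; subs.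
    by rewrite !addsmx_sub hZT /T /=; apply/andP; split; [apply/andP; split|]; subs.
  have hax : (adm br x <= I)%MS.
    by apply: (adm_le_I hL (abZx x) hfull); rewrite /A0 addsmxSr.
  have hCx := rank_Cn_ge hax.
  have [y [hy1 hy2 ry]] := @pick_new F n n n A0 (Cn br x) ltac:(rewrite rx; nlia).
  have [w [hw rw]] := @pick_out F n n (A0 + y)%MS ltac:(rewrite ry rx; nlia).
  have exy : br x y = 0 by apply/eqP; rewrite -(CnP _ _ hL).
  apply: (@two_piece F n br z (A0 + y)%MS <<w>>%MS hL h2 e6 hz').
  - rewrite /A0; comms.
  - by move=> a b; rewrite !genmxE; apply: (commb_rv hL).
  have : (1%:M <= A0 + y + w)%MS by apply: rank_full; rewrite rw ry rx; nlia.
  by move/submx_trans; apply; subs.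
have [hC|/eqP hC] := eqVneq n r.+4.
  have [x [hx rx]] := @pick_out F n n Z ltac:(nlia).
  have hCx0 := rank_Cn_ge (admZ x).
  have [y [hy1 hy2 ry]] := @pick_new F n n n (Z + x)%MS (Cn br x) ltac:(rewrite rx; nlia).
  have exy : br x y = 0 by apply/eqP; rewrite -(CnP _ _ hL).
  set A0 := (Z + x + y)%MS in ry.
  have abA0 : commb br A0 A0 by rewrite /A0; comms.
  have [u [hu ru]] := @pick_out F n n A0 ltac:(rewrite ry rx; nlia).
  have [v [hv rv]] := @pick_out F n n (A0 + u)%MS ltac:(rewrite ru ry rx; nlia).
  have hfull : (1%:M <= A0 + u + v)%MS by apply: rank_full; rewrite rv ru ry rx; nlia.
  set I := (A0 *m adm br u + A0 *m adm br v)%MS.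
  case: (boolP (br u v <= I)%MS) => hI.
    exact: (from_fix hL h2 e6 hz' abA0 hfull hI).
  have IZ : (I <= Z)%MS.
    by rewrite addsmx_sub !(submx_trans (submxMl _ _)) ?admZ.
  have rI := rank_add1 hI.
  have hIr : (\rank (I + br u v)%MS <= r)%N.
    by apply: mxrankS; rewrite addsmx_sub IZ brZ.
  have hax : (adm br x <= I)%MS by apply: (adm_le_I hL abA0 hfull); rewrite /A0; subs.
  have hay : (adm br y <= I)%MS by apply: (adm_le_I hL abA0 hfull); rewrite /A0; subs.
  have [m [hm1 hm2 rm]] := @pick_new F n n n A0 (Cn br x) ltac:(have := rank_Cn_ge hax; rewrite ry rx; nlia).
  have [m' [hm'1 hm'2 rm']] := @pick_new F n n n A0 (Cn br y) ltac:(have := rank_Cn_ge hay; rewrite ry rx; nlia).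
  have exm : br x m = 0 by apply/eqP; rewrite -(CnP _ _ hL).
  have eym' : br y m' = 0 by apply/eqP; rewrite -(CnP _ _ hL).
  case: (boolP (m' <= A0 + m)%MS) => hmm; last first.
    have rmm := rank_add1 hmm.
    apply: (@two_piece F n br z (Z + x + m)%MS (y + m')%MS hL h2 e6 hz').
    - comms.
    - comms.
    have : (1%:M <= A0 + m + m')%MS by apply: rank_full; rewrite rmm rm ry rx; nlia.
    by move/submx_trans; apply; rewrite /A0; subs.
  have hmm' : (m <= A0 + m')%MS.
    have h1 : (A0 + m' <= A0 + m)%MS by rewrite addsmx_sub addsmxSl hmm.
    have h3 := sub_rank_eq h1 ltac:(rewrite (rank_add1 hm'2) rm; nlia).
    exact: submx_trans (addsmxSr _ _) h3.
  have hA0y : (A0 + m' <= Cn br y)%MS.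
    rewrite addsmx_sub hm'1 andbT; apply/row_subP => i; rewrite (CnP _ _ hL).
    by apply/eqP; apply: abA0; [rewrite /A0; subs | exact: row_sub].
  have eym : br y m = 0.
    by apply/eqP; rewrite -(CnP _ _ hL); exact: submx_trans hmm' hA0y.
  have cA0m : commb br A0 m by rewrite /A0; comms.
  have [t [ht rt]] := @pick_out F n n (A0 + m)%MS ltac:(rewrite rm ry rx; nlia).
  have hAt : (A0 *m adm br t <= I)%MS.
    apply/row_subP => i; rewrite (row_adm _ _ _ hL) (brC hL) -admE //.
    apply: negmx_sub; apply: submx_trans (submxMl _ _) _.
    exact: (adm_le_I hL abA0 hfull (row_sub i A0)).
  have rK := mxrank_mul_ker A0 (adm br t).
  have rAt : (\rank (A0 *m adm br t) <= 1)%N.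
    by apply: leq_trans (mxrankS hAt) _; nlia.
  have [k1 [hk1 hk1' rk1]] := @pick_new F n n n Z (A0 :&: Cn br t)%MS
    ltac:(rewrite /Cn; move: rK rAt; rewrite ry rx; nlia).
  move: hk1; rewrite sub_capmx => /andP [hk1A hk1t].
  have etk : br t k1 = 0 by apply/eqP; rewrite -(CnP _ _ hL).
  have [k2 [hk2A hk2 rk2]] := @pick_new F n n n (Z + k1)%MS A0
    ltac:(rewrite rk1 ry rx; nlia).
  have ek2m : br k2 m = 0 by apply: cA0m => //; exact: submx_refl.
  have hA0k : (A0 <= Z + k1 + k2)%MS.
    apply: sub_rank_eq; last by rewrite rk2 rk1 ry rx.
    by rewrite !addsmx_sub hk1A hk2A !andbT /A0; subs.
  have rmt := rank_add1 ht.
  apply: (@two_piece F n br z (Z + k1 + t)%MS (k2 + m)%MS hL h2 e6 hz').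
  - comms.
  - comms.
  have : (1%:M <= A0 + m + t)%MS by apply: rank_full; rewrite rmt rm ry rx; nlia.
  move/submx_trans; apply.
  have hR : (Z + k1 + k2 <= Z + k1 + t + (k2 + m) + Zc br)%MS by subs.
  have hA0R := submx_trans hA0k hR.
  apply: subadd; [apply: subadd; [exact: hA0R | subs] | subs].
have [hD|/eqP hD] := eqVneq n (r + 5)%N; last by exfalso; nlia.
have [x [hx rx]] := @pick_out F n n Z ltac:(nlia).
have hCx0 := rank_Cn_ge (admZ x).
have [y [hy1 hy2 ry]] := @pick_new F n n n (Z + x)%MS (Cn br x) ltac:(rewrite rx; nlia).
have exy : br x y = 0 by apply/eqP; rewrite -(CnP _ _ hL).
have hCy0 := rank_Cn_ge (admZ y).
have rcap := mxrank_sum_cap (Cn br x) (Cn br y).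
have rsum := rank_leq_col (Cn br x + Cn br y)%MS.
have [t [ht1 ht2 rt]] := @pick_new F n n n (Z + x + y)%MS (Cn br x :&: Cn br y)%MS
  ltac:(rewrite ry rx; move: rcap rsum hCx0 hCy0; nlia).
move: ht1; rewrite sub_capmx => /andP [htx hty].
have ext : br x t = 0 by apply/eqP; rewrite -(CnP _ _ hL).
have eyt : br y t = 0 by apply/eqP; rewrite -(CnP _ _ hL).
set A0 := (Z + x + y + t)%MS in rt.
have abA0 : commb br A0 A0 by rewrite /A0; comms.
have [u [hu ru]] := @pick_out F n n A0 ltac:(rewrite rt ry rx; nlia).
have [v [hv rv]] := @pick_out F n n (A0 + u)%MS ltac:(rewrite ru rt ry rx; nlia).
have hfull : (1%:M <= A0 + u + v)%MS by apply: rank_full; rewrite rv ru rt ry rx; nlia.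
set I := (A0 *m adm br u + A0 *m adm br v)%MS.
case: (boolP (br u v <= I)%MS) => hI.
  exact: (from_fix hL h2 e6 hz' abA0 hfull hI).
exfalso.
have IZ : (I <= Z)%MS.
  by rewrite addsmx_sub !(submx_trans (submxMl _ _)) ?admZ.
have rI := rank_add1 hI.
have hIr : (\rank (I + br u v)%MS <= r)%N.
  by apply: mxrankS; rewrite addsmx_sub IZ brZ.
have hax : (adm br x <= I)%MS by apply: (adm_le_I hL abA0 hfull); rewrite /A0; subs.
have ra : \rank (adm br x) = 0%N.
  by apply/eqP; rewrite -leqn0; apply: leq_trans (mxrankS hax) _; nlia.
move/eqP: ra; rewrite mxrank_eq0 => /eqP ha0.
move/negP: hx; apply; apply/(ZcP hL) => w.
by rewrite (brC hL) -admE // ha0 mulmx0 oppr0.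
Qed.


Lemma zeta_ex : exists z : CC, z ^+ 2 = z - 1.
Proof.
have h := @sqr_sqrtc _ (-3 : (Rdefinitions.R)[i]).
exists ((1 + sqrtc (-3 : (Rdefinitions.R)[i])) / 2).
have h2 : (2 : (Rdefinitions.R)[i]) != 0 by rewrite pnatr_eq0.
move: h; set s := sqrtc _ => h.
have e : (1 + s) ^+ 2 = 2 * (s - 1) by rewrite sqrrD h; ring.
rewrite expr_div_n e; by field.
Qed.

Unset Implicit Arguments.

Theorem proposition2p11 (n : nat) (br : 'rV[CC]_n -> 'rV[CC]_n -> 'rV[CC]_n) :
  (n <= 6)%N -> is_lie_bracket br -> two_step_nilpotent br ->
  exists D : 'M[CC]_n, is_periodic_derivation br D.
Proof.
move=> hn hL h2; have [z hz] := zeta_ex.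
exact: (main_gen hz hn hL h2).
Qed.
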